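(* Assume Assumptions 1, 2 and 3 (see context) hold, let $T\ge 1$ and let $(\eta_t)_{t\ge1}$ be a non-increasing sequence of positive step sizes used by SMD. Fix $\delta\in(0,1)$. Let $Y_1,Y_2$ be positive numbers (which may depend on $\delta$ and on $(\eta_t)_{t=1}^T$) such that, with $$\gamma=\sqrt{Y_2+\sum_{t=1}^T\eta_t^2\,(G^2+\sigma^2)}$$ and $$D_t=\max\Big\{\gamma,\sqrt{B_\psi(x^*,x_1)},\dots,\sqrt{B_\psi(x^*,x_t)}\Big\},\qquad t\ge1,$$ it holds that $$P\Big(\max_{s\le T}\sum_{t=1}^s\eta_t\Big\langle \xi_t,\frac{x_t-x^*}{\sqrt2\,D_t}\Big\rangle>Y_1\Big)\le\frac\delta2\quad\text{and}\quad P\Big(\sum_{t=1}^T\eta_t^2\big(\|\xi_t\|_*^2-\mathbb E_t\|\xi_t\|_*^2\big)>Y_2\Big)\le\frac\delta2 .$$ Then, with probability at least $1-\delta$, the average iterate $\bar x_T=\frac1T\sum_{t=1}^Tx_t$ satisfies $$f(\bar x_T)-f^*\le\frac{3}{\eta_T T}\Big(B_\psi(x^*,x_1)+\sum_{t=1}^T\eta_t^2(G^2+\sigma^2)+2Y_1^2+Y_2\Big).$$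
   Context: Let $\|\cdot\|$ be a norm on $\mathbb R^d$ with dual norm $\|y\|_*=\sup_{\|w\|\le1}\langle y,w\rangle$. Let $\mathcal X\subseteq\mathbb R^d$ be nonempty, closed and convex, and $f:\mathcal X\to\mathbb R$ convex with a minimizer $x^*\in\mathcal X$, $f^*=f(x^* )$; $\partial f(x)$ is the subdifferential. Assumption 1: the regularizer $\psi:\mathbb R^d\to(-\infty,+\infty]$ is closed, convex, differentiable on $\mathrm{int}(\mathrm{dom}\,\psi)\neq\emptyset$ (where $\mathrm{dom}\,\psi=\{\psi<\infty\}$), $1$-strongly convex w.r.t. $\|\cdot\|$ (i.e. $\psi(x)\ge\psi(y)+\langle x-y,g\rangle+\frac12\|x-y\|^2$ for $x,y\in\mathrm{dom}\,\psi$, $g\in\partial\psi(y)$), $\mathcal X\subseteq\mathrm{dom}\,\psi$, and either $\|\nabla\psi(y_k)\|_2\to\infty$ for every sequence $(y_k)$ in $\mathrm{int}\,\mathrm{dom}\,\psi$ converging to a boundary point of $\mathrm{dom}\,\psi$, or $\mathcal X\subseteq\mathrm{int}\,\mathrm{dom}\,\psi$. The Bregman divergence is $B_\psi(x,y)=\psi(x)-\psi(y)-\langle x-y,\nabla\psi(y)\rangle$. Stochastic Mirror Descent (SMD) with non-increasing positive step sizes $(\eta_t)$: pick $x_1\in\mathrm{int}\,\mathrm{dom}\,\psi$; at step $t$ the oracle returns $\hat g_t=g_t-\xi_t$ with $g_t\in\partial f(x_t)$ and noise $\xi_t\in\mathbb R^d$, and $x_{t+1}=\arg\min_{x\in\mathcal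 X}\langle\hat g_t,x\rangle+\eta_t^{-1}B_\psi(x,x_t)$. $\mathcal F_t$ is the $\sigma$-algebra generated by $\xi_1,\dots,\xi_t$ ($\mathcal F_0$ trivial), so $x_t$ and $g_t$ are $\mathcal F_{t-1}$-measurable; $\mathbb E_t[\cdot]=\mathbb E[\cdot\mid\mathcal F_{t-1}]$, and $\mathbb E_t[\xi_t]=0$. Assumption 2: $\|g\|_*\le G$ for all $x\in\mathcal X$, $g\in\partial f(x)$. Assumption 3: $\mathbb E_t\|\xi_t\|_*^2\le\sigma^2$ for all $t$. *)

(* Defs.v *)
From HB Require Import structures.
From mathcomp Require Import all_boot all_order all_algebra.
From mathcomp Require Import all_classical all_reals all_analysis.
Set Implicit Arguments. Unset Strict Implicit. Unset Printing Implicit Defensive.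
Import Order.TTheory GRing.Theory Num.Theory.
Import numFieldNormedType.Exports.
Local Open Scope classical_set_scope.
Local Open Scope ring_scope.

Section Geometry.
Variables (R : realType) (d : nat).
Local Notation V := 'rV[R]_d.

Definition ip (x y : V) : R := \sum_(i < d) x ord0 i * y ord0 i.

Definition norm2 (x : V) : R := Num.sqrt (ip x x).

Definition is_norm (nrm : V -> R) : Prop :=
  [/\ forall x, nrm x = 0 -> x = 0,
      forall (a : R) x, nrm (a *: x) = `|a| * nrm x &
      forall x y, nrm (x + y) <= nrm x + nrm y].

Definition dual_norm (nrm : V -> R) (y : V) : R :=
  sup [set ip y w | w in [set w | nrm w <= 1]].

Definition convex_set (X : set V) : Prop :=
  forall x y (l : R), X x -> X y -> 0 <= l <= 1 -> X (l *: x + (1 - l) *: y).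

(** f : X -> R is convex (values of f outside X are irrelevant). *)
Definition convex_on (X : set V) (f : V -> R) : Prop :=
  forall x y (l : R), X x -> X y -> 0 <= l <= 1 ->
    f (l *: x + (1 - l) *: y) <= l * f x + (1 - l) * f y.

Definition subdiff (X : set V) (f : V -> R) (x : V) : set V :=
  [set g | forall z, X z -> f x + ip g (z - x) <= f z].

Definition edom (psi : V -> \bar R) : set V := [set x | (psi x < +oo)%E].

Definition psir (psi : V -> \bar R) (x : V) : R := fine (psi x).

Definition esubdiff (psi : V -> \bar R) (y : V) : set V :=
  [set g | forall z, (psi y + (ip (z - y)%R g)%:E <= psi z)%E].

(** Gradient of psi at y (meaningful at points of int dom psi, where psi is
    real-valued near y and differentiable). *)
Definition grad (psi : V -> \bar R) (y : V) : V :=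
  \row_i ('d (psir psi) y (delta_mx ord0 i : V)).

Definition bregman (psi : V -> \bar R) (x y : V) : R :=
  psir psi x - psir psi y - ip (x - y) (grad psi y).

Definition assumption1 (nrm : V -> R) (X : set V) (psi : V -> \bar R) : Prop :=
  (forall x, psi x != -oo%E) /\
  closed [set p : V * R | (psi p.1 <= p.2%:E)%E] /\
  (forall (x y : V) (l : R), 0 <= l <= 1 ->
     (psi (l *: x + (1 - l) *: y)%R <= l%:E * psi x + (1 - l)%:E * psi y)%E) /\
  interior (edom psi) !=set0 /\
  (forall y, interior (edom psi) y -> differentiable (psir psi) y) /\
  (forall x y g, edom psi x -> edom psi y -> esubdiff psi y g ->
     psir psi y + ip (x - y) g + 2^-1 * nrm (x - y) ^+ 2 <= psir psi x) /\
  X `<=` edom psi /\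
  ((forall (y : nat -> V) (b : V), (forall k, interior (edom psi) (y k)) ->
      y @ \oo --> b -> (closure (edom psi) `\` interior (edom psi)) b ->
      (fun k => norm2 (grad psi (y k))) @ \oo --> +oo)
   \/ X `<=` interior (edom psi)).

End Geometry.

Section Probability.
Variables (R : realType) (d : nat) (dT : measure_display) (Omega : measurableType dT).
Local Notation V := 'rV[R]_d.

(** F_t = sigma(xi_1, ..., xi_t), as a family of subsets of Omega
    (F_0 is the trivial sigma-algebra). *)
Definition gen_sigma (xi : nat -> Omega -> V) (t : nat) : set (set Omega) :=
  <<s [set A | exists s (i : 'I_d) (B : set R),
          [/\ (1 <= s <= t)%N, measurable B &
              A = (fun w => xi s w ord0 i) @^-1` B]] >>.

Definition Fmeas (F : set (set Omega)) (Z : Omega -> R) : Prop :=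
  forall B : set R, measurable B -> F (Z @^-1` B).

Definition Fmeas_vec (F : set (set Omega)) (Z : Omega -> V) : Prop :=
  forall i : 'I_d, Fmeas F (fun w => Z w ord0 i).

Definition cexp_version (P : probability Omega R) (F : set (set Omega))
    (Y Z : Omega -> R) : Prop :=
  Fmeas F Z /\
  forall A, F A -> (\int[P]_(w in A) (Z w)%:E = \int[P]_(w in A) (Y w)%:E)%E.

End Probability.

Section SMD.
Variables (R : realType) (d : nat) (dT : measure_display) (Omega : measurableType dT).
Local Notation V := 'rV[R]_d.

Definition smd_gamma (eta : nat -> R) (G sigma Y2 : R) (T : nat) : R :=
  Num.sqrt (Y2 + \sum_(1 <= t < T.+1) eta t ^+ 2 * (G ^+ 2 + sigma ^+ 2)).

Definition smd_D (psi : V -> \bar R) (x : nat -> Omega -> V) (xstar : V)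
    (gamma : R) (t : nat) (w : Omega) : R :=
  \big[Num.max/gamma]_(1 <= s < t.+1) Num.sqrt (bregman psi xstar (x s w)).

Definition avg_iterate (x : nat -> Omega -> V) (T : nat) (w : Omega) : V :=
  (T%:R)^-1 *: \sum_(1 <= t < T.+1) x t w.

End SMD.

(* Main.v *)
Require Import Defs.
From HB Require Import structures.
From mathcomp Require Import all_boot all_order all_algebra.
From mathcomp Require Import all_classical all_reals all_analysis.
From mathcomp Require Import ring lra.
Import Order.TTheory GRing.Theory Num.Theory.
Import numFieldNormedType.Exports.
Local Open Scope classical_set_scope.
Local Open Scope ring_scope.
Set Implicit Arguments. Unset Strict Implicit.

Section IP.
Variables (R : realType) (d : nat).
Local Notation V := 'rV[R]_d.

Lemma ipDl (a b c : V) : ip (a + b) c = ip a c + ip b c.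
Proof. rewrite /ip -big_split /=; apply: eq_bigr => i _; by rewrite mxE mulrDl. Qed.
Lemma ipDr (a b c : V) : ip c (a + b) = ip c a + ip c b.
Proof. rewrite /ip -big_split /=; apply: eq_bigr => i _; by rewrite mxE mulrDr. Qed.
Lemma ipZl (k : R) (a c : V) : ip (k *: a) c = k * ip a c.
Proof. rewrite /ip mulr_sumr; apply: eq_bigr => i _; by rewrite mxE mulrA. Qed.
Lemma ipZr (k : R) (a c : V) : ip c (k *: a) = k * ip c a.
Proof. rewrite /ip mulr_sumr; apply: eq_bigr => i _; by rewrite mxE mulrCA. Qed.
Lemma ipNl (a c : V) : ip (- a) c = - ip a c.
Proof. by rewrite -scaleN1r ipZl mulN1r. Qed.
Lemma ipNr (a c : V) : ip c (- a) = - ip c a.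
Proof. by rewrite -scaleN1r ipZr mulN1r. Qed.
Lemma ipBl (a b c : V) : ip (a - b) c = ip a c - ip b c.
Proof. by rewrite ipDl ipNl. Qed.
Lemma ipBr (a b c : V) : ip c (a - b) = ip c a - ip c b.
Proof. by rewrite ipDr ipNr. Qed.
Lemma ipC (a c : V) : ip a c = ip c a.
Proof. by rewrite /ip; apply: eq_bigr => i _; rewrite mulrC. Qed.
Lemma ip0l (c : V) : ip 0 c = 0.
Proof. by rewrite -(scale0r 0) ipZl mul0r. Qed.
Lemma ip0r (c : V) : ip c 0 = 0.
Proof. by rewrite -(scale0r 0) ipZr mul0r. Qed.

Section Norm.
Variable nrm : V -> R.
Hypothesis hn : is_norm nrm.

Lemma nrm0 : nrm 0 = 0.
Proof. case: hn => _ hZ _; by rewrite -(scale0r 0) hZ normr0 mul0r. Qed.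
Lemma nrmN x : nrm (- x) = nrm x.
Proof. case: hn => _ hZ _; by rewrite -scaleN1r hZ normrN normr1 mul1r. Qed.
Lemma nrm_ge0 x : 0 <= nrm x.
Proof.
case: hn => _ hZ hD.
have := hD x (- x); rewrite subrr nrm0 nrmN => h.
by rewrite -(pmulrn_lge0 _ (isT : (0 < 2)%N)) mulr2n.
Qed.

Lemma nrm_sum (I : finType) (F : I -> V) : nrm (\sum_i F i) <= \sum_i nrm (F i).
Proof.
case: hn => _ _ hD.
elim/big_ind2: _ => //; first by rewrite nrm0.
by move=> a b c e h1 h2; apply: le_trans (hD _ _) _; apply: lerD.
Qed.

Lemma entry_le_mxnorm (x : V) i : `|x ord0 i| <= `|x|.
Proof.
have -> : `|x| = mx_norm x by [].
rewrite mx_normrE.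
exact: (@le_bigmax _ _ _ 0 (fun ij : 'I_1 * 'I_d => `|x ij.1 ij.2|) (ord0, i)).
Qed.

Let C := \sum_(i < d) nrm (delta_mx ord0 i : V).

Lemma C_ge0 : 0 <= C.
Proof. by apply: sumr_ge0 => i _; apply: nrm_ge0. Qed.

Lemma nrm_le_mx (x : V) : nrm x <= C * `|x|.
Proof.
rewrite {1}(row_sum_delta x).
apply: le_trans (nrm_sum _) _.
rewrite /C mulr_suml; apply: ler_sum => i _.
case: hn => _ hZ _; rewrite hZ mulrC; apply: ler_wpM2l; first exact: nrm_ge0.
exact: entry_le_mxnorm.
Qed.

Lemma nrm_continuous : continuous nrm.
Proof.
move=> x; apply/(@cvgrPdist_lt _ _ _ (nbhs x) (@nbhs_filter _ x)) => e e0.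
have C1 : 0 < C + 1 by apply: ltr_wpDl; [exact: C_ge0|exact: ltr01].
have : \forall t \near x, `|x - t| < e / (C + 1).
  apply: (@cvgr_dist_lt _ _ _ (nbhs x) (@nbhs_filter _ x) id x cvg_id).
  by rewrite divr_gt0.
apply: filterS => t ht.
case: hn => _ _ hD.
have h1 : nrm x <= nrm t + nrm (x - t) by rewrite -{1}(subrK t x) addrC hD.
have h2 : nrm t <= nrm x + nrm (t - x) by rewrite -{1}(subrK x t) addrC hD.
have h3 : nrm (x - t) <= C * `|x - t| := nrm_le_mx _.
have h4 : nrm (t - x) <= C * `|x - t| by rewrite -opprB nrmN.
have h5 : C * `|x - t| < e.
  apply: (@le_lt_trans _ _ ((C + 1) * `|x - t|)).
    by apply: ler_wpM2r => //; rewrite lerDl.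
  by rewrite mulrC -ltr_pdivlMr.
rewrite ltr_norml; apply/andP; split; lra.
Qed.

End Norm.
End IP.

Section NormEquiv.
Variables (R : realType) (n : nat).
Local Notation V := 'rV[R]_n.

Lemma norm_lower (nrm : V -> R) : is_norm nrm ->
  exists2 m : R, 0 < m & forall w, m * `|w| <= nrm w.
Proof.
move=> hn; case: n nrm hn => [|k] nrm hn.
  exists 1 => // w.
  have -> : w = 0 by apply/rowP => -[].
  by rewrite normr0 mulr0 (nrm0 hn).
pose A := [set w : 'rV[R]_k.+1 | `|w| = 1].
have w0nz : (delta_mx ord0 ord0 : 'rV[R]_k.+1) != 0.
  apply/eqP => /rowP /(_ ord0); rewrite !mxE !eqxx /=; apply/eqP; exact: oner_neq0.
have A0 : A !=set0.
  exists (`|delta_mx ord0 ord0 : 'rV[R]_k.+1|^-1 *: (delta_mx ord0 ord0)).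
  rewrite /A /= normrZ normrV ?unitfE ?normr_eq0 // normr_id mulVf //.
  by rewrite normr_eq0.
have Ab : bounded_set A.
  exists 1; split; first exact: num_real.
  move=> M M1 x Ax; rewrite /= Ax; exact: ltW.
have Acl : closed A.
  apply: (@preimage_closed _ _ (fun w : 'rV[R]_k.+1 => `|w|) [set x | x = 1]).
    by move=> x _; apply: norm_continuous.
  exact: closed_eq.
have Acp := bounded_closed_compact Ab Acl.
have [c cA cmin] := EVT_min_rV A0 Acp (continuous_subspaceT (nrm_continuous hn)).
have cnz : c != 0.
  apply/eqP => c0; move: cA; rewrite inE /A /= c0 normr0 => /esym/eqP.
  by rewrite oner_eq0.
have mpos : 0 < nrm c.
  rewrite lt_neqAle nrm_ge0 // andbT; apply/eqP => /esym h.
  case: hn h => h0 _ _ /h0 /eqP; by rewrite (negbTE cnz).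
exists (nrm c) => // w.
have [->|wnz] := eqVneq w 0; first by rewrite normr0 mulr0 nrm0.
have nw : 0 < `|w| by rewrite normr_gt0.
have := cmin (`|w|^-1 *: w); rewrite inE /A /= normrZ normrV ?unitfE ?gt_eqF //.
rewrite normr_id mulVf ?gt_eqF // => /(_ erefl).
case: hn => _ hZ _; rewrite hZ normrV ?unitfE ?gt_eqF // normr_id.
by move=> h; rewrite -ler_pdivlMr // mulrC.
Qed.

End NormEquiv.

Section Dual.
Variables (R : realType) (d : nat) (nrm : 'rV[R]_d -> R).
Hypothesis hn : is_norm nrm.

Lemma ip_le_abs (y w : 'rV[R]_d) : ip y w <= (\sum_i `|y ord0 i|) * `|w|.
Proof.
rewrite /ip mulr_suml; apply: ler_sum => i _.
apply: le_trans (ler_norm _) _; rewrite normrM; apply: ler_wpM2l => //.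
exact: entry_le_mxnorm.
Qed.

Lemma dual_has_sup y : has_sup [set ip y w | w in [set w | nrm w <= 1]].
Proof.
split.
  by exists (ip y 0), 0 => //=; rewrite (nrm0 hn).
have [m m0 hm] := norm_lower hn.
exists ((\sum_i `|y ord0 i|) / m) => _ [w /= hw <-].
apply: le_trans (ip_le_abs y w) _; apply: ler_wpM2l.
  by apply: sumr_ge0 => i _.
by rewrite -[m^-1]mul1r ler_pdivlMr // mulrC; apply: le_trans (hm w) hw.
Qed.

Lemma dual_ge0 y : 0 <= dual_norm nrm y.
Proof.
rewrite /dual_norm; apply: sup_upper_bound; first exact: dual_has_sup.
by exists 0 => //=; [rewrite (nrm0 hn) | rewrite ip0r].
Qed.

Lemma ip_le_dual y w : ip y w <= dual_norm nrm y * nrm w.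
Proof.
have [->|wnz] := eqVneq w 0; first by rewrite ip0r (nrm0 hn) mulr0.
have nw : 0 < nrm w.
  rewrite lt_neqAle (nrm_ge0 hn) andbT; apply/eqP => /esym h.
  by case: hn h => h0 _ _ /h0 /eqP; rewrite (negbTE wnz).
have h1 : ip y ((nrm w)^-1 *: w) <= dual_norm nrm y.
  rewrite /dual_norm; apply: sup_upper_bound; first exact: dual_has_sup.
  exists ((nrm w)^-1 *: w) => //=.
  case: hn => _ hZ _; rewrite hZ ger0_norm ?invr_ge0 ?(ltW nw) // mulVf ?gt_eqF //.
move: h1; rewrite ipZr -ler_pdivlMl ?invr_gt0 // invrK mulrC; exact.
Qed.

End Dual.

Section Deriv.
Variables (R : realType) (d : nat).
Local Notation V := 'rV[R]_d.

Lemma dd_cvg (f : V -> R) y v : differentiable f y ->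
  (fun h : R => h^-1 *: (f (h *: v + y) - f y)) @ 0^'+ --> 'd f y v.
Proof.
move=> df; rewrite -deriveE //.
have h : derivable f y v := diff_derivable df.
have sub : ((0:R)^'+ : set_system R) --> (0:R)^'.
  move=> A; rewrite /at_right /within; apply: (@filterS _ (nbhs (0:R)) _) => x Ax x0.
  by apply: Ax; rewrite gt_eqF.
exact: cvg_trans (cvg_app _ sub) h.
Qed.

Lemma dd_le (f : V -> R) y v c : differentiable f y ->
  (forall h, 0 < h <= 1 -> h^-1 * (f (h *: v + y) - f y) <= c) -> 'd f y v <= c.
Proof.
move=> df hc; have H := dd_cvg (v:=v) df.
have := @cvgr_to_le _ _ (at_right_proper_filter 0) _ _ _ c H.
apply.
near=> h; apply: hc; apply/andP; split; near: h.
  exact: nbhs_right_gt.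
exact: nbhs_right_le.
Unshelve. all: by end_near.
Qed.

Lemma dd_ge (f : V -> R) y v c : differentiable f y ->
  (forall h, 0 < h <= 1 -> c <= h^-1 * (f (h *: v + y) - f y)) -> c <= 'd f y v.
Proof.
move=> df hc; have H := dd_cvg (v:=v) df.
have := @cvgr_to_ge _ _ (at_right_proper_filter 0) _ _ _ c H.
apply.
near=> h; apply: hc; apply/andP; split; near: h.
  exact: nbhs_right_gt.
exact: nbhs_right_le.
Unshelve. all: by end_near.
Qed.

Lemma ip_grad (psi : V -> \bar R) y v : ip v (grad psi y) = 'd (psir psi) y v.
Proof.
rewrite {2}(row_sum_delta v) linear_sum /ip; apply: eq_bigr => i _.
by rewrite linearZ /= mxE.
Qed.

End Deriv.


Opaque grad.

Lemma fin_comb (R : realType) (eta P Q U V Bxy Bxy' By n K M : R) :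
  0 <= eta * Q - U + V -> V - U = Bxy - Bxy' - By -> 2^-1 * n ^+ 2 <= By ->
  eta * P <= K -> K - 2^-1 * n ^+ 2 <= M ->
  eta * (P - Q) <= Bxy - Bxy' + M.
Proof. move=> h1 h2 h3 h4 h5; rewrite mulrBr; lra. Qed.

Lemma tp (R : realType) d (a b c G1 G2 : 'rV[R]_d) (pa pb pc : R) :
  ip (a - c) G2 - ip (a - c) G1 =
  (pa - pb - ip (a - b) G1) - (pa - pc - ip (a - c) G2) - (pc - pb - ip (c - b) G1).
Proof. rewrite !ipBl; ring. Qed.

Lemma cvx (R : realType) d (X : set 'rV[R]_d) : convex_set X ->
  forall x y (h : R), X x -> X y -> 0 <= h -> h <= 1 -> X (h *: x + (1 - h) *: y).
Proof.
move=> cX x y h Xx Xy h0 h1.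
have := cX x y (Itv01 h0 h1) (mem_set Xx) (mem_set Xy).
rewrite inE. move=> H. exact: H.
Qed.

Section Psi.
Variables (R : realType) (d : nat) (nrm : 'rV[R]_d -> R) (psi : 'rV[R]_d -> \bar R).
Local Notation V := 'rV[R]_d.
Hypothesis hninf : forall x, psi x != -oo%E.
Hypothesis hconv : forall (x y : V) (l : R), 0 <= l <= 1 ->
     (psi (l *: x + (1 - l) *: y)%R <= l%:E * psi x + (1 - l)%:E * psi y)%E.
Hypothesis hdiff : forall y, interior (edom psi) y -> differentiable (psir psi) y.
Hypothesis hstrong : forall x y g, edom psi x -> edom psi y -> esubdiff psi y g ->
     psir psi y + ip (x - y) g + 2^-1 * nrm (x - y) ^+ 2 <= psir psi x.

Lemma psiE x : edom psi x -> psi x = (psir psi x)%:E.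
Proof.
rewrite /edom /psir /=; have := hninf x; case: (psi x) => //.
Qed.

Lemma grad_sub y : interior (edom psi) y -> esubdiff psi y (grad psi y).
Proof.
move=> iy; rewrite /esubdiff /= => z; have ey : edom psi y := interior_subset iy.
have [ez|nez] := pselect (edom psi z); last first.
  have -> : psi z = +oo%E.
    move: nez; rewrite /edom /=; have := hninf z; case: (psi z) => //.
    by move=> r _; case; exact: ltry.
  exact: leey.
rewrite (psiE ey) (psiE ez) -EFinD lee_fin ip_grad -lerBrDl.
apply: dd_le; first exact: hdiff.
move=> h /andP[h0 h1].
have hw := hconv z y (l:=h) (ltac:(by rewrite (ltW h0) h1)).
rewrite (psiE ey) (psiE ez) -!EFinM -EFinD in hw.
have ew : edom psi (h *: z + (1 - h) *: y).
  by rewrite /edom /=; apply: le_lt_trans hw _; exact: ltry.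
rewrite (psiE ew) lee_fin in hw.
have -> : h *: (z - y) + y = h *: z + (1 - h) *: y.
  by apply/rowP => i; rewrite !mxE; lra.
rewrite ler_pdivrMl // ; lra.
Qed.

Lemma bregman_ge x y : edom psi x -> interior (edom psi) y ->
  2^-1 * nrm (x - y) ^+ 2 <= bregman psi x y.
Proof.
move=> ex iy; have := hstrong ex (interior_subset iy) (grad_sub iy).
rewrite /bregman; lra.
Qed.

Lemma opt_ineq (a v y : V) : interior (edom psi) y ->
  (forall h, 0 < h <= 1 -> ip a y + psir psi y <= ip a (h *: v + y) + psir psi (h *: v + y)) ->
  0 <= ip a v + ip v (grad psi y).
Proof.
move=> iy hopt; rewrite ip_grad -lerBlDl sub0r.
apply: dd_ge; first exact: hdiff.
move=> h /andP[h0 h1]; have := hopt h (ltac:(by rewrite h0 h1)).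
rewrite ipDr ipZr => H.
rewrite ler_pdivlMl //; lra.
Qed.

Lemma step_ineq (hn : is_norm nrm) (X : set V) (G Nx eta : R) (g xi y y' xs : V) :
  convex_set X -> X `<=` edom psi -> X xs -> X y' ->
  interior (edom psi) y -> interior (edom psi) y' -> 0 < eta ->
  (forall u, ip g u <= G * nrm u) -> (forall u, ip xi u <= Nx * nrm u) ->
  (forall z, X z -> ip (g - xi) y' + eta^-1 * bregman psi y' y
                    <= ip (g - xi) z + eta^-1 * bregman psi z y) ->
  eta * ip (g - xi) (y - xs) <=
    bregman psi xs y - bregman psi xs y' + eta ^+ 2 * (G ^+ 2 + Nx ^+ 2).
Proof.
move=> cX sX Xxs Xy' iy iy' eta0 hg hxi hmin.
set gh := g - xi.
have h1 : 0 <= ip (eta *: gh - grad psi y) (xs - y') + ip (xs - y') (grad psi y').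
  apply: opt_ineq => // h /andP[h0 h1].
  have Xz : X (h *: (xs - y') + y').
    have -> : h *: (xs - y') + y' = h *: xs + (1 - h) *: y'.
      by apply/rowP => i; rewrite !mxE; lra.
    by apply: (cvx cX) => //; exact: ltW.
  have := hmin _ Xz; rewrite /bregman.
  set z := h *: (xs - y') + y' => H.
  rewrite /gh !ipBl in H.
  have H2 := H; rewrite -(ler_pM2l eta0) in H2.
  have ee : eta * eta^-1 = 1 by rewrite mulfV ?gt_eqF.
  rewrite !(mulrBr, mulrDr, mulrN, mulrA) ee !mul1r in H2.
  rewrite !ipBl !ipZl !ipBl (ipC (grad psi y) y') (ipC (grad psi y) z).
  rewrite !(mulrBr, mulrDr, mulrN).
  lra.
have e1 : ip (eta *: gh - grad psi y) (xs - y') = eta * ip gh (xs - y') - ip (xs - y') (grad psi y).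
  by rewrite ?ipBl ?ipZl ?ipBl (ipC (grad psi y) (xs - y')) ipBl.
have e2 : ip (xs - y') (grad psi y') - ip (xs - y') (grad psi y)
   = bregman psi xs y - bregman psi xs y' - bregman psi y' y.
  exact: tp.
have h3 := bregman_ge (interior_subset iy') iy.
set n := nrm (y - y').
have nn : nrm (y' - y) = n by rewrite -opprB (nrmN hn).
rewrite nn in h3.
have h4 : ip gh (y - y') <= (G + Nx) * n.
  rewrite /gh ipBl mulrDl; have := hg (y - y'); have := hxi (- (y - y')).
  rewrite (nrmN hn) ipNr -/n => k1 k2; exact: lerD.
have e3 : ip gh (y - xs) = ip gh (y - y') - ip gh (xs - y').
  rewrite (ipBr y xs gh) (ipBr y y' gh) (ipBr xs y' gh). ring.
rewrite e3.
have h5 : eta * ((G + Nx) * n) - 2^-1 * n ^+ 2 <= eta ^+ 2 * (G ^+ 2 + Nx ^+ 2).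
  rewrite -subr_ge0.
  have -> : eta ^+ 2 * (G ^+ 2 + Nx ^+ 2) - (eta * ((G + Nx) * n) - 2^-1 * n ^+ 2)
    = 2^-1 * (eta * (G + Nx) - n) ^+ 2 + 2^-1 * (eta * (G - Nx)) ^+ 2.
    by field.
  by apply: addr_ge0; apply: mulr_ge0; rewrite ?invr_ge0 ?sqr_ge0.
have h6 : eta * ip gh (y - y') <= eta * ((G + Nx) * n).
  rewrite ler_pM2l; [exact: h4 | exact: eta0].
rewrite e1 in h1.
exact: (fin_comb h1 e2 h3 h6 h5).
Qed.

End Psi.

Section Det.
Variables (R : rcfType) (T : nat) (B D e c a : nat -> R) (gam Y1 : R).
Hypothesis gam0 : 0 < gam.
Hypothesis Y10 : 0 < Y1.
Hypothesis B0 : forall t, (1 <= t)%N -> 0 <= B t.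
Hypothesis Dgam : forall t, gam <= D t.
Hypothesis Dmono : forall t, D t <= D t.+1.
Hypothesis DB : forall t, (1 <= t)%N -> Num.sqrt (B t) <= D t.
Hypothesis Dle : forall t K, (1 <= t <= T)%N -> gam <= K ->
  (forall s, (1 <= s <= t)%N -> Num.sqrt (B s) <= K) -> D t <= K.
Hypothesis e0 : forall t, (1 <= t)%N -> 0 <= e t.
Hypothesis stepi : forall t, (1 <= t <= T)%N ->
  e t + B t.+1 - B t <= Num.sqrt 2 * D t * a t + c t.
Hypothesis c0 : forall t, (1 <= t)%N -> 0 <= c t.
Hypothesis csum : \sum_(1 <= t < T.+1) c t <= gam ^+ 2.
Hypothesis asum : forall s, (1 <= s <= T)%N -> \sum_(1 <= t < s.+1) a t <= Y1.

Let Dpos t : 0 < D t. Proof. exact: lt_le_trans gam0 (Dgam t). Qed.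

Let Q s := B s.+1 / D s + \sum_(1 <= t < s.+1) e t / D t
   <= B 1%N / D 1%N + Num.sqrt 2 * \sum_(1 <= t < s.+1) a t
      + (\sum_(1 <= t < s.+1) c t) / gam.

Let stepd t : (1 <= t <= T)%N ->
  (B t.+1 - B t) / D t + e t / D t <= Num.sqrt 2 * a t + c t / gam.
Proof.
move=> /andP[t1 tT]; have := stepi (t:=t); rewrite t1 tT => /(_ isT) h.
have Dt := Dpos t.
have h1 : c t / D t <= c t / gam.
  by apply: ler_wpM2l; [exact: c0| rewrite lef_pV2 ?posrE].
have h2 : (B t.+1 - B t) / D t + e t / D t <= Num.sqrt 2 * a t + c t / D t.
  have DtN : D t != 0 by rewrite gt_eqF.
  have -> : (B t.+1 - B t) / D t + e t / D t = (e t + B t.+1 - B t) / D t.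
    by field.
  have -> : Num.sqrt 2 * a t + c t / D t = (Num.sqrt 2 * D t * a t + c t) / D t.
    by field.
  by rewrite ler_pM2r ?invr_gt0.
lra.
Qed.

Let Qall s : (1 <= s <= T)%N -> Q s.
Proof.
elim: s => [//|s IH] /andP[s1 sT].
have [s0|s0] := eqVneq s 0%N.
  subst s; rewrite /Q !big_nat1.
  have := stepd (t:=1%N); rewrite sT => /(_ isT).
  rewrite !mulrBl; lra.
have sp : (1 <= s)%N by rewrite lt0n.
have := IH; rewrite sp (ltnW sT) => /(_ isT); rewrite /Q => IH'.
rewrite !(big_nat_recr s.+1) //=.
have := stepd (t:=s.+1); rewrite sT => /(_ isT) h.
have hB : B s.+1 / D s.+1 <= B s.+1 / D s.
  apply: ler_wpM2l; first exact: B0.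
  by rewrite lef_pV2 ?posrE ?Dpos.
rewrite !mulrBl in h.
rewrite mulrDl mulrDr; lra.
Qed.

Let K := Num.sqrt (B 1%N) + gam + Num.sqrt 2 * Y1.

Let sum_c s : (s <= T)%N -> \sum_(1 <= t < s.+1) c t <= gam ^+ 2.
Proof.
move=> sT; apply: le_trans csum.
rewrite [X in _ <= X](big_cat_nat (n:=s.+1)) //= ?ltnS //.
rewrite lerDl big_nat_cond; apply: sumr_ge0 => i /andP[/andP[i1 _] _]; apply: c0.
exact: leq_ltn_trans (leq0n s) i1.
Qed.

Let B1D1 : B 1%N / D 1%N <= Num.sqrt (B 1%N).
Proof.
rewrite ler_pdivrMr ?Dpos //.
have hB := B0 (t:=1%N) isT.
rewrite -{1}(sqr_sqrtr hB) expr2; apply: ler_wpM2l; first exact: sqrtr_ge0.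
exact: DB.
Qed.

Let Qbound s : (1 <= s <= T)%N ->
  B s.+1 / D s + \sum_(1 <= t < s.+1) e t / D t <= K.
Proof.
move=> hs; apply: le_trans (Qall hs) _.
have h1 := asum hs.
have h2 : (\sum_(1 <= t < s.+1) c t) / gam <= gam.
  rewrite ler_pdivrMr // -expr2; apply: sum_c.
  by case/andP: hs.
have h3 : Num.sqrt 2 * \sum_(1 <= t < s.+1) a t <= Num.sqrt 2 * Y1.
  by rewrite ler_wpM2l ?sqrtr_ge0.
have := B1D1; rewrite /K; lra.
Qed.

Let sumeD_ge0 s : 0 <= \sum_(1 <= t < s.+1) e t / D t.
Proof.
rewrite big_nat_cond; apply: sumr_ge0 => i /andP[/andP[i1 _] _]; apply: mulr_ge0; first exact: e0.
by rewrite invr_ge0 ltW ?Dpos.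
Qed.

Let K0 : 0 <= K.
Proof.
rewrite /K; apply: addr_ge0; first by apply: addr_ge0; [exact: sqrtr_ge0 | exact: ltW].
by apply: mulr_ge0; [exact: sqrtr_ge0 | exact: ltW].
Qed.

Let Dall t : (1 <= t <= T)%N -> D t <= K.
Proof.
have gK : gam <= K.
  rewrite /K; have := sqrtr_ge0 (B 1%N); have : 0 <= Num.sqrt 2 * Y1.
    by apply: mulr_ge0; [exact: sqrtr_ge0 | exact: ltW].
  lra.
suff P : forall t, (t <= T)%N -> forall s, (1 <= s <= t)%N -> Num.sqrt (B s) <= K.
  by move=> /andP[t1 tT]; apply: Dle => //; [rewrite t1 tT | exact: P].
clear t; elim=> [|t IH] tT s /andP[s1 st].
  by move: (leq_trans s1 st).
have [st'|st'] := leqP s t.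
  by apply: IH; [exact: ltnW | rewrite s1 st'].
have -> : s = t.+1 by apply/eqP; rewrite eqn_leq st st'.
have [t0|t0] := eqVneq t 0%N.
  subst t; rewrite /K; have : 0 <= Num.sqrt 2 * Y1.
    by apply: mulr_ge0; [exact: sqrtr_ge0 | exact: ltW].
  have := ltW gam0; lra.
have t1 : (1 <= t)%N by rewrite lt0n.
have hQ := Qbound (s:=t); rewrite t1 (ltnW tT) in hQ.
have := hQ isT => {}hQ.
have hDt : D t <= K by apply: Dle => //; [rewrite t1 (ltnW tT) | exact: IH (ltnW tT)].
have hq : B t.+1 / D t <= K.
  by have := sumeD_ge0 t; lra.
have hBK : B t.+1 <= K ^+ 2.
  move: hq; rewrite ler_pdivrMr ?Dpos // => hq; apply: le_trans hq _.
  by rewrite expr2 ler_wpM2l.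
rewrite -(ger0_norm K0) -sqrtr_sqr ler_sqrt ?sqr_ge0 // ger0_norm //.
Qed.

Lemma det_bound : (1 <= T)%N -> \sum_(1 <= t < T.+1) e t <= K ^+ 2.
Proof.
move=> T1.
have hT : (1 <= T <= T)%N by rewrite T1 leqnn.
have hQ := Qbound hT.
have hs : \sum_(1 <= t < T.+1) e t / D t <= K.
  have : 0 <= B T.+1 / D T.
    by apply: mulr_ge0; [exact: B0| rewrite invr_ge0 ltW ?Dpos].
  lra.
apply: (@le_trans _ _ (K * \sum_(1 <= t < T.+1) e t / D t)); last first.
  by rewrite expr2 ler_wpM2l.
rewrite mulr_sumr; apply: ler_sum_nat => i /andP[i1 iT].
have hD : D i <= K by apply: Dall; rewrite i1 -ltnS iT.
rewrite {1}(_ : e i = D i * (e i / D i)); last by rewrite mulrCA divff ?mulr1 // gt_eqF ?Dpos.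
apply: ler_wpM2r => //; apply: mulr_ge0; first exact: e0.
by rewrite invr_ge0 ltW ?Dpos.
Qed.

End Det.

Section BigMax.
Variables (R : realType) (g : R) (F : nat -> R).

Lemma bm_ge t : g <= \big[Num.max/g]_(1 <= s < t.+1) F s.
Proof. exact: bigmax_ge_id. Qed.

Lemma bm_le t K : g <= K -> (forall s, (1 <= s <= t)%N -> F s <= K) ->
  \big[Num.max/g]_(1 <= s < t.+1) F s <= K.
Proof.
move=> gK hF; rewrite big_nat_cond; apply: bigmax_le => // i /andP[/andP[i1 it] _].
by apply: hF; rewrite i1 -ltnS it.
Qed.

Lemma bm_F s t : (1 <= s <= t)%N -> F s <= \big[Num.max/g]_(1 <= s < t.+1) F s.
Proof.
move=> hs; apply: le_bigmax_seq => //; rewrite mem_index_iota.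
by case/andP: hs => -> ; rewrite ltnS.
Qed.

End BigMax.

Section Jensen.
Variables (R : realType) (d : nat).
Variables (X : set 'rV[R]_d) (f : 'rV[R]_d -> R) (x : nat -> 'rV[R]_d).
Hypothesis cX : convex_set X.
Hypothesis cf : convex_on X f.
Hypothesis Xx : forall t, (1 <= t)%N -> X (x t).

Lemma jensen n : (1 <= n)%N ->
  X (n%:R^-1 *: \sum_(1 <= t < n.+1) x t) /\
  f (n%:R^-1 *: \sum_(1 <= t < n.+1) x t) <= n%:R^-1 * \sum_(1 <= t < n.+1) f (x t).
Proof.
elim: n => [//|n IH] _.
have [->|n0] := eqVneq n 0%N.
  rewrite !big_nat1 invr1 scale1r mul1r; split => //; exact: Xx.
have n1 : (1 <= n)%N by rewrite lt0n.
set av := fun n : nat => n%:R^-1 *: \sum_(1 <= t < n.+1) x t.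
have [Xa fa] := IH n1.
have nR : 0 < n%:R :> R by rewrite ltr0n.
set l : R := (n.+1)%:R^-1.
have l0 : 0 <= l by rewrite invr_ge0.
have l1 : l <= 1 by rewrite /l invf_le1 ?ltr0n // ler1n.
have e1 : (1 - l) * n%:R^-1 = l.
  rewrite /l -addn1 natrD; field.
  by rewrite gt_eqF ?gt_eqF //; apply: ltr_wpDl => //; exact: ltW.
have ea : av n.+1 = l *: x n.+1 + (1 - l) *: av n.
  rewrite /av scalerA e1 big_nat_recr //= scalerDr addrC.
  by [].
rewrite -/(av n.+1).
have Xn1 : X (x n.+1) by apply: Xx.
split.
  by rewrite ea; apply: (cvx cX) => //.
have H : f (l *: x n.+1 + (1 - l) *: av n) <= l * f (x n.+1) + (1 - l) * f (av n).
  by apply: cf => //; rewrite l0 l1.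
rewrite ea; apply: le_trans H _.
rewrite big_nat_recr //= mulrDr addrC -/l.
have : (1 - l) * f (av n) <= (1 - l) * (n%:R^-1 * \sum_(1 <= i < n.+1) f (x i)).
  by apply: ler_wpM2l => //; rewrite subr_ge0.
rewrite mulrA e1; lra.
Qed.

End Jensen.

Lemma hf_aux (R : realType) (a b c : R) : a + - c <= b -> a - b <= c.
Proof. move=> h; lra. Qed.

Lemma stepi_comb (R : realType) (eta F Pg Pgx Px Bt Bt1 C Z : R) :
  F <= Pg -> Pgx = Pg - Px -> eta * Pgx <= Bt - Bt1 + C -> Z = eta * Px ->
  0 < eta -> eta * F + Bt1 - Bt <= Z + C.
Proof.
move=> h1 h2 h3 h4 h5; rewrite h4; rewrite h2 mulrBr in h3.
have : eta * F <= eta * Pg by rewrite ler_pM2l.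
lra.
Qed.

Lemma csum_pt (R : realType) (e G s N c : R) :
  c <= s ^+ 2 ->
  e ^+ 2 * (G ^+ 2 + N ^+ 2) <= e ^+ 2 * (G ^+ 2 + s ^+ 2) + e ^+ 2 * (N ^+ 2 - c).
Proof.
move=> h; rewrite -mulrDr; apply: ler_wpM2l; first exact: sqr_ge0.
lra.
Qed.

Lemma final_comb (R : realType) (fa fs SF SE eT T K b S Y1 Y2 : R) :
  0 < eT -> 0 < T ->
  fa <= T^-1 * SF -> eT * (SF - T * fs) <= SE -> SE <= K ^+ 2 ->
  K ^+ 2 <= 3 * (b + (Y2 + S) + 2 * Y1 ^+ 2) ->
  fa - fs <= 3 / (eT * T) * (b + S + 2 * Y1 ^+ 2 + Y2).
Proof.
move=> eT0 T0 h1 h2 h3 h4.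
have h5 : eT * (SF - T * fs) <= 3 * (b + S + 2 * Y1 ^+ 2 + Y2) by lra.
have h6 : SF - T * fs <= 3 * (b + S + 2 * Y1 ^+ 2 + Y2) / eT.
  by rewrite ler_pdivlMr // mulrC.
have -> : 3 / (eT * T) * (b + S + 2 * Y1 ^+ 2 + Y2)
    = T^-1 * (3 * (b + S + 2 * Y1 ^+ 2 + Y2) / eT).
  by field; rewrite !gt_eqF.
have -> : fa - fs = (fa - T^-1 * SF) + T^-1 * (SF - T * fs).
  by field; rewrite gt_eqF.
have : T^-1 * (SF - T * fs) <= T^-1 * (3 * (b + S + 2 * Y1 ^+ 2 + Y2) / eT).
  by rewrite ler_pM2l ?invr_gt0.
lra.
Qed.

Lemma K_sq (R : realType) (a g c b Y1 : R) :
  a ^+ 2 = b -> c ^+ 2 = 2 * Y1 ^+ 2 ->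
  (a + g + c) ^+ 2 <= 3 * (b + g ^+ 2 + 2 * Y1 ^+ 2).
Proof.
move=> ha hc; rewrite -ha -hc.
have : 0 <= (a - g) ^+ 2 + (g - c) ^+ 2 + (a - c) ^+ 2 by rewrite !addr_ge0 ?sqr_ge0.
move=> h; rewrite -subr_ge0.
have -> : 3 * (a ^+ 2 + g ^+ 2 + c ^+ 2) - (a + g + c) ^+ 2
   = (a - g) ^+ 2 + (g - c) ^+ 2 + (a - c) ^+ 2 by ring.
exact: h.
Qed.

Section DetMain.
Variables (R : realType) (d : nat) (nrm : 'rV[R]_d -> R) (X : set 'rV[R]_d)
  (f : 'rV[R]_d -> R) (xstar : 'rV[R]_d) (psi : 'rV[R]_d -> \bar R) (G sigma : R)
  (eta : nat -> R) (x1 : 'rV[R]_d) (xi g x : nat -> 'rV[R]_d) (cxi : nat -> R)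
  (T : nat) (Y1 Y2 : R).
Local Notation V := 'rV[R]_d.
Hypothesis hn : is_norm nrm.
Hypothesis cX : convex_set X.
Hypothesis cvxf : convex_on X f.
Hypothesis Xxs : X xstar.
Hypothesis fmin : forall z, X z -> f xstar <= f z.
Hypothesis hninf : forall x, psi x != -oo%E.
Hypothesis hconv : forall (x y : V) (l : R), 0 <= l <= 1 ->
     (psi (l *: x + (1 - l) *: y)%R <= l%:E * psi x + (1 - l)%:E * psi y)%E.
Hypothesis hdiff : forall y, interior (edom psi) y -> differentiable (psir psi) y.
Hypothesis hstrong : forall x y g, edom psi x -> edom psi y -> esubdiff psi y g ->
     psir psi y + ip (x - y) g + 2^-1 * nrm (x - y) ^+ 2 <= psir psi x.
Hypothesis hXsub : X `<=` edom psi.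
Hypothesis hG : forall z gz, X z -> subdiff X f z gz -> dual_norm nrm gz <= G.
Hypothesis heta : forall t, (1 <= t)%N -> 0 < eta t.
Hypothesis hetam : forall s t, (1 <= s <= t)%N -> eta t <= eta s.
Hypothesis Xx1 : X x1.
Hypothesis hx1 : x 1%N = x1.
Hypothesis ix : forall t, (1 <= t)%N -> interior (edom psi) (x t).
Hypothesis hsub : forall t, (1 <= t)%N -> subdiff X f (x t) (g t).
Hypothesis hsmd : forall t, (1 <= t)%N ->
     X (x t.+1) /\
     forall z, X z ->
       ip (g t - xi t) (x t.+1) + (eta t)^-1 * bregman psi (x t.+1) (x t)
       <= ip (g t - xi t) z + (eta t)^-1 * bregman psi z (x t).
Hypothesis T1 : (1 <= T)%N.
Hypothesis Y10 : 0 < Y1.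
Hypothesis Y20 : 0 < Y2.
Hypothesis nb1 : forall s, (1 <= s <= T)%N ->
  \sum_(1 <= t < s.+1) eta t * ip (xi t)
     ((Num.sqrt 2 * \big[Num.max/smd_gamma eta G sigma Y2 T]_(1 <= s < t.+1)
         Num.sqrt (bregman psi xstar (x s)))^-1 *: (x t - xstar)) <= Y1.
Hypothesis nb2 : \sum_(1 <= t < T.+1)
     eta t ^+ 2 * (dual_norm nrm (xi t) ^+ 2 - cxi t) <= Y2.
Hypothesis ncx : forall t, (1 <= t)%N -> cxi t <= sigma ^+ 2.

Let Xx t : (1 <= t)%N -> X (x t).
Proof.
case: t => [//|[|t]] _; first by rewrite hx1.
by have [] := hsmd (t:=t.+1) isT.
Qed.

Let S := \sum_(1 <= t < T.+1) eta t ^+ 2 * (G ^+ 2 + sigma ^+ 2).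
Let gam := smd_gamma eta G sigma Y2 T.
Let S0 : 0 <= S.
Proof.
by apply: sumr_ge0 => i _; apply: mulr_ge0; rewrite ?sqr_ge0 // addr_ge0 ?sqr_ge0.
Qed.
Let gam0 : 0 < gam.
Proof. by rewrite /gam /smd_gamma sqrtr_gt0 -/S ltr_wpDr. Qed.
Let gam2 : gam ^+ 2 = Y2 + S.
Proof. by rewrite /gam /smd_gamma sqr_sqrtr // addr_ge0 // ltW. Qed.

Let Bf t := bregman psi xstar (x t).
Let Df t := \big[Num.max/gam]_(1 <= s < t.+1) Num.sqrt (Bf s).
Let ef t := eta t * (f (x t) - f xstar).
Let cf t := eta t ^+ 2 * (G ^+ 2 + dual_norm nrm (xi t) ^+ 2).
Let af t := eta t * ip (xi t) ((Num.sqrt 2 * Df t)^-1 *: (x t - xstar)).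

Let Dpos t : 0 < Df t.
Proof. exact: lt_le_trans gam0 (bm_ge _ _ _). Qed.

Let B0 t : (1 <= t)%N -> 0 <= Bf t.
Proof.
move=> t1; have := bregman_ge hninf hconv hdiff hstrong (hXsub Xxs) (ix t1).
apply: le_trans; apply: mulr_ge0; rewrite ?invr_ge0 ?sqr_ge0 //.
Qed.

Let stepi t : (1 <= t <= T)%N -> ef t + Bf t.+1 - Bf t <= Num.sqrt 2 * Df t * af t + cf t.
Proof.
move=> /andP[t1 tT].
have [Xt1 hmin] := hsmd t1.
have hg : forall u, ip (g t) u <= G * nrm u.
  move=> u; apply: le_trans (ip_le_dual hn (g t) u) _.
  apply: ler_wpM2r; first exact: nrm_ge0.
  exact: hG (Xx t1) (hsub t1).
have hxi : forall u, ip (xi t) u <= dual_norm nrm (xi t) * nrm u.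
  move=> u; exact: ip_le_dual hn (xi t) u.
have hs := step_ineq hninf hconv hdiff hstrong hn cX hXsub Xxs Xt1 (ix t1) (ix (leqW t1))
   (heta t1) hg hxi hmin.
have hf : f (x t) - f xstar <= ip (g t) (x t - xstar).
  have := hsub t1 Xxs; rewrite -opprB ipNr; move=> h.
  exact: hf_aux h.
apply: (stepi_comb hf _ hs _ (heta t1)).
  by rewrite ipBl.
rewrite /af ipZr; field.
by rewrite gt_eqF ?Dpos //= sqrtr_eq0 -ltNge.
Qed.

Lemma det_main :
  f ((T%:R)^-1 *: \sum_(1 <= t < T.+1) x t) - f xstar
  <= 3 / (eta T * T%:R) *
     (bregman psi xstar x1 + \sum_(1 <= t < T.+1) eta t ^+ 2 * (G ^+ 2 + sigma ^+ 2)
      + 2 * Y1 ^+ 2 + Y2).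
Proof.
have Dgam t : gam <= Df t by exact: bm_ge.
have DB t : (1 <= t)%N -> Num.sqrt (Bf t) <= Df t.
  by move=> t1; apply: bm_F; rewrite t1 leqnn.
have Dle t K : (1 <= t <= T)%N -> gam <= K ->
    (forall s, (1 <= s <= t)%N -> Num.sqrt (Bf s) <= K) -> Df t <= K.
  by move=> _ gK hs; apply: bm_le.
have Dmono t : Df t <= Df t.+1.
  apply: bm_le; first exact: bm_ge.
  move=> s /andP[s1 st]; apply: bm_F; rewrite s1; exact: leqW.
have e0 t : (1 <= t)%N -> 0 <= ef t.
  move=> t1; apply: mulr_ge0; first exact: ltW (heta t1).
  by rewrite subr_ge0; apply: fmin; apply: Xx.
have c0 t : (1 <= t)%N -> 0 <= cf t.
  by move=> _; apply: mulr_ge0; rewrite ?sqr_ge0 // addr_ge0 ?sqr_ge0.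
have csum : \sum_(1 <= t < T.+1) cf t <= gam ^+ 2.
  rewrite gam2.
  apply: (@le_trans _ _ (\sum_(1 <= t < T.+1) (eta t ^+ 2 * (G ^+ 2 + sigma ^+ 2)
                + eta t ^+ 2 * (dual_norm nrm (xi t) ^+ 2 - cxi t)))).
    apply: ler_sum_nat => i /andP[i1 _]; apply: csum_pt; exact: ncx.
  by rewrite big_split /= -/S addrC; apply: lerD.
have asum s : (1 <= s <= T)%N -> \sum_(1 <= t < s.+1) af t <= Y1.
  exact: nb1.
have hdb := det_bound gam0 Y10 B0 Dgam Dmono DB Dle e0 stepi c0 csum asum T1.
have [_ hj] := jensen cX cvxf Xx T1.
have hT : 0 < T%:R :> R by rewrite ltr0n.
have heT := heta T1.
apply: (final_comb heT hT hj _ hdb).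
  have eS : \sum_(1 <= t < T.+1) f (x t) - T%:R * f xstar
      = \sum_(1 <= t < T.+1) (f (x t) - f xstar).
    by rewrite sumrB sumr_const_nat subn1 /= mulr_natl.
  rewrite eS mulr_sumr; apply: ler_sum_nat => i /andP[i1 iT].
  rewrite /ef; apply: ler_wpM2r.
    by rewrite subr_ge0; apply: fmin; apply: Xx.
  by apply: hetam; rewrite i1 -ltnS.
have hk := @K_sq R (Num.sqrt (Bf 1%N)) gam (Num.sqrt 2 * Y1) (bregman psi xstar x1) Y1.
rewrite gam2 in hk; apply: hk.
  by rewrite sqr_sqrtr /Bf ?hx1 //; rewrite -hx1; apply: (B0 (t:=1%N)).
by rewrite exprMn sqr_sqrtr.
Qed.

End DetMain.

Lemma ae_cxi (R : realType) (dT : measure_display) (Omega : measurableType dT)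
  (P : probability Omega R) (cxi : nat -> Omega -> R) (sigma : R) :
  (forall t, (1 <= t)%N -> {ae P, forall w, cxi t w <= sigma ^+ 2}) ->
  exists N, [/\ measurable N, P N = 0%E &
    forall w, ~ N w -> forall t, (1 <= t)%N -> cxi t w <= sigma ^+ 2].
Proof.
move=> h.
have h' : forall n, \forall w \ae P, (1 <= n)%N -> cxi n w <= sigma ^+ 2.
  move=> n; have [n1|n0] := leqP 1 n.
    by apply: filterS (h n n1) => w hw _.
  by apply: filterS (h 1%N isT) => w _.
have [N [mN PN sN]] := ae_foralln h'.
exists N; split => // w nNw t t1.
case: (boolP (cxi t w <= sigma ^+ 2)) => // hc; exfalso; apply: nNw; apply: sN => /= H.
by move: (H t t1); rewrite (negbTE hc).
Qed.

Lemma prob_good (R : realType) (dT : measure_display) (Omega : measurableType dT)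
  (P : probability Omega R) (B1 B2 N : set Omega) (delta : R) :
  measurable B1 -> measurable B2 -> measurable N ->
  (P B1 <= (delta / 2)%:E)%E -> (P B2 <= (delta / 2)%:E)%E -> P N = 0%E ->
  ((1 - delta)%:E <= P (~` (B1 `|` B2 `|` N)))%E.
Proof.
move=> m1 m2 mN p1 p2 pN.
have mU : measurable (B1 `|` B2 `|` N) by apply: measurableU => //; apply: measurableU.
rewrite probability_setC //.
have hU : (P (B1 `|` B2 `|` N) <= delta%:E)%E.
  have m12 : measurable (B1 `|` B2) by apply: measurableU.
  have u1 := @measureU2 _ _ _ P _ _ m12 mN.
  have u2 := @measureU2 _ _ _ P _ _ m1 m2.
  have pN' : (P N <= 0)%E by rewrite pN.
  apply: (le_trans u1); rewrite -[X in (_ <= X)%E]adde0; apply: leeD; last exact: pN'.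
  apply: (le_trans u2).
  by apply: (le_trans (leeD p1 p2)); rewrite -EFinD lee_fin; lra.
have h0 : (0 <= P (B1 `|` B2 `|` N))%E by [].
have hf : P (B1 `|` B2 `|` N) \is a fin_num.
  by rewrite ge0_fin_numE //; apply: le_lt_trans hU _; exact: ltry.
rewrite -(fineK hf) in hU h0 *.
rewrite lee_fin in hU; rewrite lee_fin in h0.
by rewrite -EFinB lee_fin; lra.
Qed.

Unset Implicit Arguments.
Unset Strict Implicit.

Theorem theorem1 (R : realType) (d : nat)
    (nrm : 'rV[R]_d -> R) (X : set 'rV[R]_d) (f : 'rV[R]_d -> R)
    (xstar : 'rV[R]_d) (psi : 'rV[R]_d -> \bar R) (G sigma : R)
    (dT : measure_display) (Omega : measurableType dT) (P : probability Omega R)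
    (eta : nat -> R) (x1 : 'rV[R]_d)
    (xi g x : nat -> Omega -> 'rV[R]_d) (cxi : nat -> Omega -> R)
    (T : nat) (delta Y1 Y2 : R) :
  (* setting *)
  is_norm nrm ->
  X !=set0 -> closed X -> convex_set X ->
  convex_on X f -> X xstar -> (forall z, X z -> f xstar <= f z) ->
  (* Assumption 1 *)
  assumption1 nrm X psi ->
  (* Assumption 2 *)
  (forall z gz, X z -> subdiff X f z gz -> dual_norm nrm gz <= G) ->
  (* step sizes: positive, non-increasing *)
  (forall t, (1 <= t)%N -> 0 < eta t) ->
  (forall s t, (1 <= s <= t)%N -> eta t <= eta s) ->
  (* the noise: random vectors, E_t[xi_t] = 0 *)
  (forall t (i : 'I_d), measurable_fun setT (fun w => xi t w ord0 i)) ->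
  (forall t (i : 'I_d), (1 <= t)%N ->
     P.-integrable setT (EFin \o (fun w => xi t w ord0 i)) /\
     cexp_version P (gen_sigma xi t.-1) (fun w => xi t w ord0 i) (fun _ => 0)) ->
  (* Assumption 3: cxi t is (a version of) E_t ||xi_t||_*^2, bounded by sigma^2 a.s. *)
  (forall t, (1 <= t)%N ->
     cexp_version P (gen_sigma xi t.-1) (fun w => dual_norm nrm (xi t w) ^+ 2) (cxi t) /\
     {ae P, forall w, cxi t w <= sigma ^+ 2}) ->
  (* SMD iterates *)
  X x1 -> interior (edom psi) x1 ->
  (forall w, x 1%N w = x1) ->
  (forall t w, (1 <= t)%N -> interior (edom psi) (x t w)) ->
  (forall t, (1 <= t)%N -> Fmeas_vec (gen_sigma xi t.-1) (x t)) ->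
  (forall t, (1 <= t)%N -> Fmeas_vec (gen_sigma xi t.-1) (g t)) ->
  (forall t w, (1 <= t)%N -> subdiff X f (x t w) (g t w)) ->
  (forall t w, (1 <= t)%N ->
     X (x t.+1 w) /\
     forall z, X z ->
       ip (g t w - xi t w) (x t.+1 w) + (eta t)^-1 * bregman psi (x t.+1 w) (x t w)
       <= ip (g t w - xi t w) z + (eta t)^-1 * bregman psi z (x t w)) ->
  (* parameters *)
  (1 <= T)%N -> 0 < delta < 1 -> 0 < Y1 -> 0 < Y2 ->
  (* the two high-probability hypotheses *)
  (let gamma := smd_gamma eta G sigma Y2 T in
   exists B1 : set Omega, [/\ measurable B1,
     [set w | exists s, (1 <= s <= T)%N /\
        Y1 < \sum_(1 <= t < s.+1)
               eta t * ip (xi t w)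
                 ((Num.sqrt 2 * smd_D psi x xstar gamma t w)^-1 *: (x t w - xstar))]
       `<=` B1 &
     (P B1 <= (delta / 2)%:E)%E]) ->
  (exists B2 : set Omega, [/\ measurable B2,
     [set w | Y2 < \sum_(1 <= t < T.+1)
                     eta t ^+ 2 * (dual_norm nrm (xi t w) ^+ 2 - cxi t w)] `<=` B2 &
     (P B2 <= (delta / 2)%:E)%E]) ->
  (* conclusion: with probability at least 1 - delta *)
  exists A : set Omega, [/\ measurable A, ((1 - delta)%:E <= P A)%E &
    forall w, A w ->
      f (avg_iterate x T w) - f xstar
      <= 3 / (eta T * T%:R) *
         (bregman psi xstar x1 + \sum_(1 <= t < T.+1) eta t ^+ 2 * (G ^+ 2 + sigma ^+ 2)
          + 2 * Y1 ^+ 2 + Y2)].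
Proof.
move=> hn Xne Xcl cX cvxf Xxs fmin hA1 hG heta hetam hxim hxii hcxi Xx1 ix1 hx1 ix hxF hgF hsub hsmd T1 hdel Y10 Y20 hB1 hB2.
case: hA1 => hninf [_ [hconv [_ [hdiff [hstrong [hXsub _]]]]]].
have [B1 [mB1 sB1 pB1]] := hB1.
have [B2 [mB2 sB2 pB2]] := hB2.
have [N [mN pN hN]] := ae_cxi (fun t t1 => (hcxi t t1).2).
exists (~` (B1 `|` B2 `|` N)); split.
- by apply: measurableC; apply: measurableU => //; apply: measurableU.
- exact: prob_good.
move=> w /= hw.
have nB1 : ~ B1 w by move=> h; apply: hw; left; left.
have nB2 : ~ B2 w by move=> h; apply: hw; left; right.
have nN : ~ N w by move=> h; apply: hw; right.
rewrite /avg_iterate.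
apply: (det_main (x := fun t => x t w) (xi := fun t => xi t w) (g := fun t => g t w)
  (cxi := fun t => cxi t w) hn cX cvxf Xxs fmin hninf hconv hdiff hstrong hXsub hG heta hetam
  Xx1 (hx1 w) _ _ _ T1 Y10 Y20 _ _ _).
- by move=> t t1; exact: ix t w t1.
- by move=> t t1; exact: hsub t w t1.
- by move=> t t1; exact: hsmd t w t1.
- move=> s hs; rewrite leNgt; apply/negP => hlt; apply: nB1; apply: sB1.
  by exists s; split.
- rewrite leNgt; apply/negP => hlt; apply: nB2; apply: sB2; exact: hlt.
- exact: hN w nN.
Qed.
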